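(* Let $R$ be a complex superalgebra of type $(2,1)$ which is right alternative and nontrivial. Then $R$ is isomorphic to one of the following superalgebras, written in a homogeneous basis $e_1,e_2$ (even), $f_1$ (odd) by listing their nonzero products (all unlisted products of basis elements are zero): $\mathbf{R}_{01}$: $e_1e_1=e_1,\ e_2e_2=e_2$; $\mathbf{R}_{02}$: $e_1e_1=e_1,\ e_2e_2=e_2,\ e_1f_1=f_1,\ f_1e_1=f_1$; $\mathbf{R}_{03}$: $e_1e_1=e_1,\ e_2e_2=e_2,\ e_1f_1=f_1,\ f_1e_1=f_1,\ f_1f_1=e_1$; $\mathbf{R}_{04}$: $e_1e_1=e_1,\ e_2e_2=e_2,\ f_1e_1=f_1$; $\mathbf{R}_{05}$: $e_1e_1=e_1,\ e_2e_2=e_2,\ e_1f_1=f_1$; $\mathbf{R}_{06}$: $e_1e_1=e_1,\ e_2e_2=e_2,\ e_1f_1=f_1,\ f_1f_1=e_1$; $\mathbf{R}_{07}$: $e_1e_1=e_1,\ e_2e_2=e_2,\ e_2f_1=f_1,\ f_1e_1=f_1$; $\mathbf{R}_{08}$: $e_1e_1=e_1,\ e_2e_2=e_2,\ e_2f_1=f_1,\ f_1e_1=f_1,\ f_1f_1=e_2$; $\mathbf{R}_{09}$: $e_1e_1=e_1$; $\mathbf{R}_{10}$: $e_1e_1=e_1,\ f_1f_1=e_2$; $\mathbf{R}_{11}$: $e_1e_1=e_1,\ f_1e_1=f_1$; $\mathbf{R}_{12}$: $e_1e_1=e_1,\ f_1e_1=f_1,\ f_1f_1=e_2$; $\mathbf{R}_{13}$: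 $e_1e_1=e_1,\ e_1f_1=f_1$; $\mathbf{R}_{14}$: $e_1e_1=e_1,\ e_1f_1=f_1,\ f_1f_1=e_1$; $\mathbf{R}_{15}$: $e_1e_1=e_1,\ e_1f_1=f_1,\ f_1e_1=f_1$; $\mathbf{R}_{16}$: $e_1e_1=e_1,\ e_1f_1=f_1,\ f_1e_1=f_1,\ f_1f_1=e_1$; $\mathbf{R}_{17}$: $e_1e_1=e_1,\ e_1e_2=e_2,\ e_2e_1=e_2$; $\mathbf{R}_{18}$: $e_1e_1=e_1,\ e_1e_2=e_2,\ e_2e_1=e_2,\ e_1f_1=f_1$; $\mathbf{R}_{19}$: $e_1e_1=e_1,\ e_1e_2=e_2,\ e_2e_1=e_2,\ e_1f_1=f_1,\ f_1f_1=e_2$; $\mathbf{R}_{20}$: $e_1e_1=e_1,\ e_1e_2=e_2,\ e_2e_1=e_2,\ f_1e_1=f_1$; $\mathbf{R}_{21}$: $e_1e_1=e_1,\ e_1e_2=e_2,\ e_2e_1=e_2,\ e_1f_1=f_1,\ f_1e_1=f_1$; $\mathbf{R}_{22}$: $e_1e_1=e_1,\ e_1e_2=e_2,\ e_2e_1=e_2,\ e_1f_1=f_1,\ f_1e_1=f_1,\ f_1f_1=e_2$; $\mathbf{R}_{23}$: $e_1e_1=e_1,\ e_1e_2=e_2$; $\mathbf{R}_{24}$: $e_1e_1=e_1,\ e_1e_2=e_2,\ f_1f_1=e_2$; $\mathbf{R}_{25}$: $e_1e_1=e_1,\ e_2e_1=e_2$; $\mathbf{R}_{26}$: $e_1e_1=e_1,\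 e_2e_1=e_2,\ e_1f_1=f_1$; $\mathbf{R}_{27}$: $e_1e_1=e_1,\ e_2e_1=e_2,\ e_1f_1=f_1,\ f_1f_1=e_1$; $\mathbf{R}_{28}$: $e_1e_1=e_1,\ e_2e_1=e_2,\ e_1f_1=f_1,\ f_1f_1=e_2$; $\mathbf{R}_{29}$: $e_1e_1=e_1,\ e_1e_2=e_2,\ f_1e_1=f_1$; $\mathbf{R}_{30}$: $e_1e_1=e_1,\ e_1e_2=e_2,\ f_1e_1=f_1,\ f_1f_1=e_2$; $\mathbf{R}_{31}$: $e_1e_1=e_1,\ e_2e_1=e_2,\ f_1e_1=f_1$; $\mathbf{R}_{32}$: $e_1e_1=e_1,\ e_1e_2=e_2,\ e_1f_1=f_1$; $\mathbf{R}_{33}$: $e_1e_1=e_1,\ e_2e_1=e_2,\ e_1f_1=f_1,\ f_1e_1=f_1$; $\mathbf{R}_{34}$: $e_1e_1=e_1,\ e_2e_1=e_2,\ e_1f_1=f_1,\ f_1e_1=f_1,\ f_1f_1=e_1$; $\mathbf{R}_{35}$: $e_1e_1=e_1,\ e_2e_1=e_2,\ e_1f_1=f_1,\ f_1e_1=f_1,\ f_1f_1=e_2$; $\mathbf{R}_{36}$: $e_1e_1=e_1,\ e_1e_2=e_2,\ e_1f_1=f_1,\ f_1e_1=f_1$; $\mathbf{R}_{37}$: $e_1e_1=e_2$; $\mathbf{R}_{38}$: $e_1e_1=e_2,\ f_1f_1=e_2$; $\mathbf{R}_{39}$: $f_1f_1=e_1$.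
   Context: All algebras are over $\mathbb{C}$. A superalgebra is a $\mathbb{Z}_2$-graded algebra $A=A_0\oplus A_1$ with $A_iA_j\subseteq A_{i+j \bmod 2}$; for a homogeneous element $x$, $|x|\in\{0,1\}$ denotes its degree. It has type $(n,m)$ if $\dim A_0=n$ and $\dim A_1=m$. Isomorphisms of superalgebras are grading-preserving algebra isomorphisms. The associator is $(x,y,z)=(xy)z-x(yz)$. A superalgebra is right alternative if $(x,y,z)=-(-1)^{|y||z|}(x,z,y)$ for all homogeneous $x,y,z$. A superalgebra is trivial if all its products are zero. *)

(* Defs.v *)
From HB Require Import structures.
From mathcomp Require Import all_boot all_algebra complex.
From mathcomp Require Import Rstruct.
Set Implicit Arguments. Unset Strict Implicit. Unset Printing Implicit Defensive.
Import GRing.Theory.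
Local Open Scope ring_scope.

Definition C : numClosedFieldType := (Rdefinitions.R)[i].

(* A superalgebra of type (2,1) over C, written in a homogeneous basis
   e_1 = index 0, e_2 = index 1 (even), f_1 = index 2 (odd).
   It is given by its structure constants: sc i j = product of basis
   vectors i and j, as a row vector of coordinates in 'rV[C]_3. *)
Definition structc := 'I_3 -> 'I_3 -> 'rV[C]_3.

Definition bdeg (i : 'I_3) : bool := (i == 2%N :> nat).

Definition smul (T : structc) (x y : 'rV[C]_3) : 'rV[C]_3 :=
  \sum_(i < 3) \sum_(j < 3) (x 0 i * y 0 j) *: T i j.

Definition graded (T : structc) : Prop :=
  forall i j k : 'I_3, bdeg k != addb (bdeg i) (bdeg j) -> T i j 0 k = 0.

Definition homog (d : bool) (x : 'rV[C]_3) : Prop :=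
  forall i : 'I_3, bdeg i != d -> x 0 i = 0.

Definition assoc (T : structc) (x y z : 'rV[C]_3) : 'rV[C]_3 :=
  smul T (smul T x y) z - smul T x (smul T y z).

Definition right_alternative (T : structc) : Prop :=
  forall (dx dy dz : bool) (x y z : 'rV[C]_3),
    homog dx x -> homog dy y -> homog dz z ->
    assoc T x y z = - ((if dy && dz then -1 else 1) *: assoc T x z y).

Definition nontrivial (T : structc) : Prop :=
  exists x y : 'rV[C]_3, smul T x y != 0.

Definition super_iso (T T' : structc) : Prop :=
  exists P : 'M[C]_3,
    [/\ P \in unitmx,
        (forall i j : 'I_3, bdeg i != bdeg j -> P i j = 0) &
        forall x y : 'rV[C]_3, smul T x y *m P = smul T' (x *m P) (y *m P)].

(* structure constants from a list of nonzero products e_i e_j = e_k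
   (triples (i, j, k) of indices: e1 = 0, e2 = 1, f1 = 2) *)
Definition mkSC (l : seq (nat * nat * nat)) : structc :=
  fun i j => \row_(k < 3) (if ((i : nat), (j : nat), (k : nat)) \in l then 1 else 0).

Definition e1 := 0%N. Definition e2 := 1%N. Definition f1 := 2%N.

Definition Rmodel (n : nat) : structc :=
  mkSC match n with
  | 1 => [:: (e1,e1,e1); (e2,e2,e2)]
  | 2 => [:: (e1,e1,e1); (e2,e2,e2); (e1,f1,f1); (f1,e1,f1)]
  | 3 => [:: (e1,e1,e1); (e2,e2,e2); (e1,f1,f1); (f1,e1,f1); (f1,f1,e1)]
  | 4 => [:: (e1,e1,e1); (e2,e2,e2); (f1,e1,f1)]
  | 5 => [:: (e1,e1,e1); (e2,e2,e2); (e1,f1,f1)]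
  | 6 => [:: (e1,e1,e1); (e2,e2,e2); (e1,f1,f1); (f1,f1,e1)]
  | 7 => [:: (e1,e1,e1); (e2,e2,e2); (e2,f1,f1); (f1,e1,f1)]
  | 8 => [:: (e1,e1,e1); (e2,e2,e2); (e2,f1,f1); (f1,e1,f1); (f1,f1,e2)]
  | 9 => [:: (e1,e1,e1)]
  | 10 => [:: (e1,e1,e1); (f1,f1,e2)]
  | 11 => [:: (e1,e1,e1); (f1,e1,f1)]
  | 12 => [:: (e1,e1,e1); (f1,e1,f1); (f1,f1,e2)]
  | 13 => [:: (e1,e1,e1); (e1,f1,f1)]
  | 14 => [:: (e1,e1,e1); (e1,f1,f1); (f1,f1,e1)]
  | 15 => [:: (e1,e1,e1); (e1,f1,f1); (f1,e1,f1)]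
  | 16 => [:: (e1,e1,e1); (e1,f1,f1); (f1,e1,f1); (f1,f1,e1)]
  | 17 => [:: (e1,e1,e1); (e1,e2,e2); (e2,e1,e2)]
  | 18 => [:: (e1,e1,e1); (e1,e2,e2); (e2,e1,e2); (e1,f1,f1)]
  | 19 => [:: (e1,e1,e1); (e1,e2,e2); (e2,e1,e2); (e1,f1,f1); (f1,f1,e2)]
  | 20 => [:: (e1,e1,e1); (e1,e2,e2); (e2,e1,e2); (f1,e1,f1)]
  | 21 => [:: (e1,e1,e1); (e1,e2,e2); (e2,e1,e2); (e1,f1,f1); (f1,e1,f1)]
  | 22 => [:: (e1,e1,e1); (e1,e2,e2); (e2,e1,e2); (e1,f1,f1); (f1,e1,f1); (f1,f1,e2)]
  | 23 => [:: (e1,e1,e1); (e1,e2,e2)]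
  | 24 => [:: (e1,e1,e1); (e1,e2,e2); (f1,f1,e2)]
  | 25 => [:: (e1,e1,e1); (e2,e1,e2)]
  | 26 => [:: (e1,e1,e1); (e2,e1,e2); (e1,f1,f1)]
  | 27 => [:: (e1,e1,e1); (e2,e1,e2); (e1,f1,f1); (f1,f1,e1)]
  | 28 => [:: (e1,e1,e1); (e2,e1,e2); (e1,f1,f1); (f1,f1,e2)]
  | 29 => [:: (e1,e1,e1); (e1,e2,e2); (f1,e1,f1)]
  | 30 => [:: (e1,e1,e1); (e1,e2,e2); (f1,e1,f1); (f1,f1,e2)]
  | 31 => [:: (e1,e1,e1); (e2,e1,e2); (f1,e1,f1)]
  | 32 => [:: (e1,e1,e1); (e1,e2,e2); (e1,f1,f1)]
  | 33 => [:: (e1,e1,e1); (e2,e1,e2); (e1,f1,f1); (f1,e1,f1)]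
  | 34 => [:: (e1,e1,e1); (e2,e1,e2); (e1,f1,f1); (f1,e1,f1); (f1,f1,e1)]
  | 35 => [:: (e1,e1,e1); (e2,e1,e2); (e1,f1,f1); (f1,e1,f1); (f1,f1,e2)]
  | 36 => [:: (e1,e1,e1); (e1,e2,e2); (e1,f1,f1); (f1,e1,f1)]
  | 37 => [:: (e1,e1,e2)]
  | 38 => [:: (e1,e1,e2); (f1,f1,e2)]
  | 39 => [:: (f1,f1,e1)]
  | _ => [::]
  end.

(* Main.v *)
Require Import Defs.
From mathcomp Require Import all_boot all_algebra complex.
From mathcomp Require Import ring Rstruct.
From Stdlib Require Import Classical FunctionalExtensionality.
Set Implicit Arguments. Unset Strict Implicit. Unset Printing Implicit Defensive.
Import GRing.Theory Num.Theory.
Local Open Scope ring_scope.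

Lemma smulZl (T : structc) a x y : smul T (a *: x) y = a *: smul T x y.
Proof.
rewrite /smul scaler_sumr; apply: eq_bigr => i _.
rewrite scaler_sumr; apply: eq_bigr => j _; by rewrite !mxE scalerA mulrA.
Qed.
Lemma smulZr (T : structc) a x y : smul T x (a *: y) = a *: smul T x y.
Proof.
rewrite /smul scaler_sumr; apply: eq_bigr => i _.
rewrite scaler_sumr; apply: eq_bigr => j _; rewrite !mxE scalerA; congr (_ *: _).
by rewrite mulrCA.
Qed.
Lemma smul_suml (T : structc) n (F : 'I_n -> 'rV[C]_3) y :
  smul T (\sum_(k < n) F k) y = \sum_(k < n) smul T (F k) y.
Proof.
rewrite /smul; symmetry; rewrite exchange_big; apply: eq_bigr => i _.
rewrite exchange_big; apply: eq_bigr => j _.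
by rewrite summxE mulr_suml scaler_suml.
Qed.
Lemma smul_sumr (T : structc) n (F : 'I_n -> 'rV[C]_3) x :
  smul T x (\sum_(k < n) F k) = \sum_(k < n) smul T x (F k).
Proof.
rewrite /smul; symmetry; rewrite exchange_big; apply: eq_bigr => i _.
rewrite exchange_big; apply: eq_bigr => j _.
by rewrite summxE mulr_sumr scaler_suml.
Qed.
Lemma smulDl (T : structc) x x' y : smul T (x + x') y = smul T x y + smul T x' y.
Proof.
rewrite /smul -big_split; apply: eq_bigr => i _.
rewrite -big_split; apply: eq_bigr => j _; by rewrite !mxE mulrDl scalerDl.
Qed.
Lemma smulDr (T : structc) x y y' : smul T x (y + y') = smul T x y + smul T x y'.
Proof.
rewrite /smul -big_split; apply: eq_bigr => i _.
rewrite -big_split; apply: eq_bigr => j _; by rewrite !mxE mulrDr scalerDl.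
Qed.
Lemma smulNl (T : structc) x y : smul T (- x) y = - smul T x y.
Proof. by rewrite -scaleN1r smulZl scaleN1r. Qed.
Lemma smulNr (T : structc) x y : smul T x (- y) = - smul T x y.
Proof. by rewrite -scaleN1r smulZr scaleN1r. Qed.
Lemma smulBl (T : structc) x x' y : smul T (x - x') y = smul T x y - smul T x' y.
Proof. by rewrite smulDl smulNl. Qed.
Lemma smulBr (T : structc) x y y' : smul T x (y - y') = smul T x y - smul T x y'.
Proof. by rewrite smulDr smulNr. Qed.

Lemma smul_mul (T : structc) (x y : 'rV[C]_3) (M : 'M[C]_3) :
  smul T (x *m M) (y *m M) =
  \sum_(i < 3) \sum_(j < 3) (x 0 i * y 0 j) *: smul T (row i M) (row j M).
Proof.
rewrite (mulmx_sum_row x) (mulmx_sum_row y) smul_suml; apply: eq_bigr => i _.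
rewrite smul_sumr; apply: eq_bigr => j _.
by rewrite smulZl smulZr scalerA mulrC.
Qed.

Definition blockM (M : 'M[C]_3) := forall i j : 'I_3, bdeg i != bdeg j -> M i j = 0.

Lemma homog_mul d x M : blockM M -> homog d x -> homog d (x *m M).
Proof.
move=> hM hx k hk; rewrite mxE; apply: big1 => i _.
case: (eqVneq (bdeg i) d) => e.
  by rewrite hM ?mulr0 // e eq_sym.
by rewrite hx ?mul0r.
Qed.

Lemma iso_basis (T T' : structc) (M N : 'M[C]_3) : M *m N = 1%:M ->
  (forall i j, smul T (row i M) (row j M) = \sum_(k<3) T' i j 0 k *: row k M) ->
  forall x y, smul T x y *m N = smul T' (x *m N) (y *m N).
Proof.
move=> MN H x y.
have NM : N *m M = 1%:M by apply: mulmx1C.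
have gen : forall x' y', smul T' x' y' *m M = smul T (x' *m M) (y' *m M).
  move=> x' y'; rewrite /smul mulmx_suml.
  rewrite [RHS]smul_mul; apply: eq_bigr => i _.
  rewrite mulmx_suml; apply: eq_bigr => j _.
  by rewrite -scalemxAl H -mulmx_sum_row.
have key : smul T' (x *m N) (y *m N) *m M = smul T x y.
  by rewrite gen -!mulmxA NM !mulmx1.
by rewrite -key -mulmxA MN mulmx1.
Qed.

Lemma iso_RA (T T' : structc) (P Q : 'M[C]_3) : P *m Q = 1%:M -> blockM Q ->
  (forall x y, smul T x y *m P = smul T' (x *m P) (y *m P)) ->
  right_alternative T -> right_alternative T'.
Proof.
move=> PQ bQ hm hRA dx dy dz x y z hx hy hz.
have QP : Q *m P = 1%:M by apply: mulmx1C.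
have e : forall w : 'rV[C]_3, w = (w *m Q) *m P by move=> w; rewrite -mulmxA QP mulmx1.
have ha : forall a b c, assoc T' (a *m P) (b *m P) (c *m P) = assoc T a b c *m P.
  by move=> a b c; rewrite /assoc mulmxBl -!hm.
rewrite (e x) (e y) (e z) !ha (hRA dx dy dz _ _ _ (homog_mul bQ hx) (homog_mul bQ hy) (homog_mul bQ hz)).
by rewrite mulNmx -scalemxAl.
Qed.

Lemma iso_nontriv (T T' : structc) (P Q : 'M[C]_3) : P *m Q = 1%:M ->
  (forall x y, smul T x y *m P = smul T' (x *m P) (y *m P)) ->
  nontrivial T -> nontrivial T'.
Proof.
move=> PQ hm [x [y h]]; exists (x *m P), (y *m P); rewrite -hm.
apply: contra h => /eqP h0; apply/eqP.
by rewrite -[smul T x y]mulmx1 -PQ mulmxA h0 mul0mx.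
Qed.

Lemma iso_trans (T1 T2 T3 : structc) : super_iso T1 T2 -> super_iso T2 T3 -> super_iso T1 T3.
Proof.
move=> [P [hP bP mP]] [Q [hQ bQ mQ]]; exists (P *m Q); split.
- by rewrite unitmx_mul hP hQ.
- move=> i j hij; rewrite mxE; apply: big1 => k _.
  case: (eqVneq (bdeg k) (bdeg i)) => e.
    by rewrite bQ ?mulr0 // e.
  by rewrite bP ?mul0r // eq_sym.
- by move=> x y; rewrite mulmxA mP mQ !mulmxA.
Qed.

Lemma iso_refl (T T' : structc) : (forall i j, T i j = T' i j) -> super_iso T T'.
Proof.
move=> h; exists 1%:M; split.
- exact: unitmx1.
- by move=> i j hij; rewrite mxE; case: eqP => // e; move: hij; rewrite e eqxx.
- move=> x y; rewrite !mulmx1 /smul; apply: eq_bigr => i _; apply: eq_bigr => j _.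
  by rewrite h.
Qed.

Record prm := Prm { m000 : C; m001 : C; m010 : C; m011 : C;
  m100 : C; m101 : C; m110 : C; m111 : C;
  a0 : C; a1 : C; b0 : C; b1 : C; c0 : C; c1 : C }.

Definition tf (p : prm) (i j k : nat) : C :=
  match i, j, k with
  | 0, 0, 0 => m000 p | 0, 0, 1 => m001 p | 0, 1, 0 => m010 p | 0, 1, 1 => m011 p
  | 1, 0, 0 => m100 p | 1, 0, 1 => m101 p | 1, 1, 0 => m110 p | 1, 1, 1 => m111 p
  | 0, 2, 2 => a0 p | 1, 2, 2 => a1 p | 2, 0, 2 => b0 p | 2, 1, 2 => b1 p
  | 2, 2, 0 => c0 p | 2, 2, 1 => c1 p
  | _, _, _ => 0 end.

Definition mkT (p : prm) : structc := fun i j => \row_k tf p i j k.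

Definition mx3 (a b c d e f g h k : C) : 'M[C]_3 :=
  \matrix_(i < 3, j < 3) nth 0 (nth [::] [:: [:: a; b; c]; [:: d; e; f]; [:: g; h; k]] i) j.

Section Tr.
Variables (p : prm) (u0 u1 v0 v1 s : C).
Definition dd := u0 * v1 - u1 * v0.
Definition nc0 (z0 z1 : C) := (z0 * v1 - z1 * v0) / dd.
Definition nc1 (z0 z1 : C) := (u0 * z1 - u1 * z0) / dd.
Definition pr (x0 x1 y0 y1 : C) (k : nat) :=
  x0 * y0 * tf p 0 0 k + x0 * y1 * tf p 0 1 k + x1 * y0 * tf p 1 0 k + x1 * y1 * tf p 1 1 k.
Definition trp : prm :=
  Prm (nc0 (pr u0 u1 u0 u1 0) (pr u0 u1 u0 u1 1)) (nc1 (pr u0 u1 u0 u1 0) (pr u0 u1 u0 u1 1))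
      (nc0 (pr u0 u1 v0 v1 0) (pr u0 u1 v0 v1 1)) (nc1 (pr u0 u1 v0 v1 0) (pr u0 u1 v0 v1 1))
      (nc0 (pr v0 v1 u0 u1 0) (pr v0 v1 u0 u1 1)) (nc1 (pr v0 v1 u0 u1 0) (pr v0 v1 u0 u1 1))
      (nc0 (pr v0 v1 v0 v1 0) (pr v0 v1 v0 v1 1)) (nc1 (pr v0 v1 v0 v1 0) (pr v0 v1 v0 v1 1))
      (u0 * a0 p + u1 * a1 p) (v0 * a0 p + v1 * a1 p)
      (u0 * b0 p + u1 * b1 p) (v0 * b0 p + v1 * b1 p)
      (nc0 (s ^+ 2 * c0 p) (s ^+ 2 * c1 p)) (nc1 (s ^+ 2 * c0 p) (s ^+ 2 * c1 p)).
End Tr.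

Lemma smulE (T : structc) x y m :
  smul T x y 0 m = \sum_(a < 3) \sum_(b < 3) x 0 a * y 0 b * T a b 0 m.
Proof.
rewrite /smul summxE; apply: eq_bigr => a _; rewrite summxE; apply: eq_bigr => b _.
by rewrite mxE.
Qed.

Ltac ord3 i := let H := fresh in case: i => [[|[|[|?]]] H] //.

Lemma tr_H (p : prm) (u0 u1 v0 v1 s : C) : dd u0 u1 v0 v1 != 0 -> s != 0 ->
  let M := mx3 u0 u1 0 v0 v1 0 0 0 s in
  forall i j, smul (mkT p) (row i M) (row j M) =
     \sum_(k < 3) mkT (trp p u0 u1 v0 v1 s) i j 0 k *: row k M.
Proof.
move=> hd hs M i j; apply/rowP => m; rewrite smulE summxE.
rewrite !big_ord_recr !big_ord0 /= !add0r.
rewrite !mxE /=.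
move: hd; rewrite /dd => hd.
ord3 i; ord3 j; ord3 m; rewrite /= /trp /nc0 /nc1 /pr /dd /=; field; done.
Qed.

Lemma tr_step (p : prm) (u0 u1 v0 v1 s : C) : dd u0 u1 v0 v1 != 0 -> s != 0 ->
  super_iso (mkT p) (mkT (trp p u0 u1 v0 v1 s)) /\
  (right_alternative (mkT p) -> right_alternative (mkT (trp p u0 u1 v0 v1 s))) /\
  (nontrivial (mkT p) -> nontrivial (mkT (trp p u0 u1 v0 v1 s))).
Proof.
move=> hd hs.
have H := tr_H p hd hs.
set M := mx3 u0 u1 0 v0 v1 0 0 0 s in H.
set d := dd u0 u1 v0 v1 in hd.
pose N := mx3 (v1 / d) (- u1 / d) 0 (- v0 / d) (u0 / d) 0 0 0 s^-1.
have MN : M *m N = 1%:M.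
  apply/matrixP => i j; rewrite !mxE !big_ord_recr big_ord0 /= !mxE.
  move: hd; rewrite /d /dd => hd.
  ord3 i; ord3 j; rewrite /=; field; done.
have bN : blockM N.
  move=> i j; ord3 i; ord3 j; rewrite /bdeg /= => h; rewrite mxE //.
have bM : blockM M.
  move=> i j; ord3 i; ord3 j; rewrite /bdeg /= => h; rewrite mxE //.
have NM : N *m M = 1%:M by apply: mulmx1C.
have hm := iso_basis MN H.
split; [|split].
- exists N; split => //; by case: (mulmx1_unit MN).
- exact: (iso_RA NM bM hm).
- exact: (iso_nontriv NM hm).
Qed.

Definition sum3 (f : nat -> C) := f 0%N + f 1%N + f 2%N.
Definition asc p (i j k m : nat) :=
  sum3 (fun l => tf p i j l * tf p l k m) - sum3 (fun l => tf p j k l * tf p i l m).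
Definition Eq p (i j k m : nat) :=
  asc p i j k m + (if (j == 2%N) && (k == 2%N) then -1 else 1) * asc p i k j m = 0.

Lemma smul_dr (T : structc) x (k : 'I_3) :
  smul T x (delta_mx 0 k) = \sum_(a < 3) x 0 a *: T a k.
Proof.
rewrite /smul; apply: eq_bigr => a _; rewrite (bigD1 k) //= big1 ?addr0.
  by rewrite mxE !eqxx mulr1.
by move=> j hj; rewrite mxE (negbTE hj) andbF mulr0 scale0r.
Qed.
Lemma smul_dl (T : structc) y (i : 'I_3) :
  smul T (delta_mx 0 i) y = \sum_(b < 3) y 0 b *: T i b.
Proof.
rewrite /smul (bigD1 i) //= [X in _ + X]big1 ?addr0.
  by apply: eq_bigr => b _; rewrite mxE !eqxx mul1r.
move=> a ha; apply: big1 => b _.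
by rewrite mxE (negbTE ha) andbF mul0r scale0r.
Qed.

Lemma homog_delta (i : 'I_3) : homog (bdeg i) (delta_mx 0 i).
Proof.
move=> k hk; rewrite mxE; case: (eqVneq k i) => [e|ne].
  by move: hk; rewrite e eqxx.
by rewrite andbF.
Qed.

Lemma sum3E (f : nat -> C) : \sum_(a < 3) f a = sum3 f.
Proof. by rewrite !big_ord_recr big_ord0 /= add0r. Qed.

Lemma smul_dd (T : structc) (i j : 'I_3) :
  smul T (delta_mx 0 i) (delta_mx 0 j) = T i j.
Proof.
rewrite smul_dl (bigD1 j) //= big1 ?addr0.
  by rewrite mxE !eqxx scale1r.
by move=> b hb; rewrite mxE (negbTE hb) andbF scale0r.
Qed.

Lemma assocE p (I J K M : 'I_3) :
  assoc (mkT p) (delta_mx 0 I) (delta_mx 0 J) (delta_mx 0 K) 0 M = asc p I J K M.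
Proof.
rewrite /assoc !smul_dd smul_dr smul_dl mxE [X in _ + X]mxE !summxE /asc.
rewrite -(sum3E (fun l => tf p I J l * tf p l K M)).
rewrite -(sum3E (fun l => tf p J K l * tf p I l M)).
congr (_ - _); apply: eq_bigr => a _; by rewrite !mxE.
Qed.

Lemma RA_E p : right_alternative (mkT p) ->
  forall i j k m, (i < 3)%N -> (j < 3)%N -> (k < 3)%N -> (m < 3)%N -> Eq p i j k m.
Proof.
move=> hRA i j k m hi hj hk hm.
have h := hRA _ _ _ _ _ _ (@homog_delta (Ordinal hi)) (@homog_delta (Ordinal hj))
  (@homog_delta (Ordinal hk)).
have := congr1 (fun v : 'rV[C]_3 => v 0 (Ordinal hm)) h.
rewrite /= assocE mxE [X in - X]mxE assocE => e.
rewrite /Eq e /bdeg /=; case: (_ && _); rewrite ?scaleN1r ?scale1r; ring.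
Qed.

Definition Lst (n : nat) : seq (nat * nat * nat) :=
match n with
  | 1 => [:: (e1,e1,e1); (e2,e2,e2)]
  | 2 => [:: (e1,e1,e1); (e2,e2,e2); (e1,f1,f1); (f1,e1,f1)]
  | 3 => [:: (e1,e1,e1); (e2,e2,e2); (e1,f1,f1); (f1,e1,f1); (f1,f1,e1)]
  | 4 => [:: (e1,e1,e1); (e2,e2,e2); (f1,e1,f1)]
  | 5 => [:: (e1,e1,e1); (e2,e2,e2); (e1,f1,f1)]
  | 6 => [:: (e1,e1,e1); (e2,e2,e2); (e1,f1,f1); (f1,f1,e1)]
  | 7 => [:: (e1,e1,e1); (e2,e2,e2); (e2,f1,f1); (f1,e1,f1)]
  | 8 => [:: (e1,e1,e1); (e2,e2,e2); (e2,f1,f1); (f1,e1,f1); (f1,f1,e2)]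
  | 9 => [:: (e1,e1,e1)]
  | 10 => [:: (e1,e1,e1); (f1,f1,e2)]
  | 11 => [:: (e1,e1,e1); (f1,e1,f1)]
  | 12 => [:: (e1,e1,e1); (f1,e1,f1); (f1,f1,e2)]
  | 13 => [:: (e1,e1,e1); (e1,f1,f1)]
  | 14 => [:: (e1,e1,e1); (e1,f1,f1); (f1,f1,e1)]
  | 15 => [:: (e1,e1,e1); (e1,f1,f1); (f1,e1,f1)]
  | 16 => [:: (e1,e1,e1); (e1,f1,f1); (f1,e1,f1); (f1,f1,e1)]
  | 17 => [:: (e1,e1,e1); (e1,e2,e2); (e2,e1,e2)]
  | 18 => [:: (e1,e1,e1); (e1,e2,e2); (e2,e1,e2); (e1,f1,f1)]
  | 19 => [:: (e1,e1,e1); (e1,e2,e2); (e2,e1,e2); (e1,f1,f1); (f1,f1,e2)]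
  | 20 => [:: (e1,e1,e1); (e1,e2,e2); (e2,e1,e2); (f1,e1,f1)]
  | 21 => [:: (e1,e1,e1); (e1,e2,e2); (e2,e1,e2); (e1,f1,f1); (f1,e1,f1)]
  | 22 => [:: (e1,e1,e1); (e1,e2,e2); (e2,e1,e2); (e1,f1,f1); (f1,e1,f1); (f1,f1,e2)]
  | 23 => [:: (e1,e1,e1); (e1,e2,e2)]
  | 24 => [:: (e1,e1,e1); (e1,e2,e2); (f1,f1,e2)]
  | 25 => [:: (e1,e1,e1); (e2,e1,e2)]
  | 26 => [:: (e1,e1,e1); (e2,e1,e2); (e1,f1,f1)]
  | 27 => [:: (e1,e1,e1); (e2,e1,e2); (e1,f1,f1); (f1,f1,e1)]
  | 28 => [:: (e1,e1,e1); (e2,e1,e2); (e1,f1,f1); (f1,f1,e2)]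
  | 29 => [:: (e1,e1,e1); (e1,e2,e2); (f1,e1,f1)]
  | 30 => [:: (e1,e1,e1); (e1,e2,e2); (f1,e1,f1); (f1,f1,e2)]
  | 31 => [:: (e1,e1,e1); (e2,e1,e2); (f1,e1,f1)]
  | 32 => [:: (e1,e1,e1); (e1,e2,e2); (e1,f1,f1)]
  | 33 => [:: (e1,e1,e1); (e2,e1,e2); (e1,f1,f1); (f1,e1,f1)]
  | 34 => [:: (e1,e1,e1); (e2,e1,e2); (e1,f1,f1); (f1,e1,f1); (f1,f1,e1)]
  | 35 => [:: (e1,e1,e1); (e2,e1,e2); (e1,f1,f1); (f1,e1,f1); (f1,f1,e2)]
  | 36 => [:: (e1,e1,e1); (e1,e2,e2); (e1,f1,f1); (f1,e1,f1)]
  | 37 => [:: (e1,e1,e2)]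
  | 38 => [:: (e1,e1,e2); (f1,f1,e2)]
  | 39 => [:: (f1,f1,e1)]
  | _ => [::]
  end.

Lemma RmodelE n : Rmodel n = mkSC (Lst n).
Proof. by []. Qed.

Definition bdn (i : nat) : bool := (i == 2%N).
Definition gradedb (t : nat * nat * nat) : bool :=
  let: (i, j, k) := t in bdn k == addb (bdn i) (bdn j).

Lemma Lst_graded n : all gradedb (Lst n).
Proof. do 40 (case: n => [|n]; first by []); by []. Qed.

Definition gv n (i j k : nat) : C := if (i, j, k) \in Lst n then 1 else 0.
Definition prmR n := Prm (gv n 0 0 0) (gv n 0 0 1) (gv n 0 1 0) (gv n 0 1 1)
  (gv n 1 0 0) (gv n 1 0 1) (gv n 1 1 0) (gv n 1 1 1)
  (gv n 0 2 2) (gv n 1 2 2) (gv n 2 0 2) (gv n 2 1 2) (gv n 2 2 0) (gv n 2 2 1).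

Lemma gv_ungr n i j k : ~~ gradedb (i, j, k) -> gv n i j k = 0.
Proof.
move=> h; rewrite /gv; case: ifP => // hin.
by move: (allP (Lst_graded n) _ hin); rewrite (negbTE h).
Qed.

Lemma gv_ungr' n i j k : ~~ gradedb (i, j, k) ->
  (if (i, j, k) \in Lst n then 1 else 0) = 0 :> C.
Proof. exact: gv_ungr. Qed.

Lemma model_ok n : super_iso (mkT (prmR n)) (Rmodel n).
Proof.
apply: iso_refl => i j; apply/rowP => k; rewrite RmodelE /mkSC !mxE.
ord3 i; ord3 j; ord3 k; rewrite /= ?gv_ungr' //.
Qed.

Lemma test5 : prmR 5 = Prm 1 0 0 0 0 0 0 1 1 0 0 0 0 0.
Proof. rewrite /prmR /gv /=. by []. Qed.

Definition Goal p := exists2 n : nat, (1 <= n <= 39)%N & super_iso (mkT p) (Rmodel n).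

Lemma step (p : prm) (u0 u1 v0 v1 s : C) : u0 * v1 - u1 * v0 != 0 -> s != 0 ->
  right_alternative (mkT p) -> nontrivial (mkT p) ->
  (right_alternative (mkT (trp p u0 u1 v0 v1 s)) -> nontrivial (mkT (trp p u0 u1 v0 v1 s)) ->
    Goal (trp p u0 u1 v0 v1 s)) -> Goal p.
Proof.
move=> hd hs hRA hN hG.
have [hi [hR hNt]] := @tr_step p u0 u1 v0 v1 s hd hs.
have [n hn hiso] := hG (hR hRA) (hNt hN).
exists n => //; exact: iso_trans hi hiso.
Qed.

Lemma leaf0 (p : prm) n : (1 <= n <= 39)%N -> p = prmR n -> Goal p.
Proof. move=> hn ->; exists n => //; exact: model_ok. Qed.

Lemma leaf (p : prm) n (u0 u1 v0 v1 s : C) : (1 <= n <= 39)%N ->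
  u0 * v1 - u1 * v0 != 0 -> s != 0 -> trp p u0 u1 v0 v1 s = prmR n -> Goal p.
Proof.
move=> hn hd hs he.
have [hi _] := @tr_step p u0 u1 v0 v1 s hd hs.
exists n => //; apply: iso_trans hi _; rewrite he; exact: model_ok.
Qed.

Lemma eq0_by (x y : C) : x = y -> y = 0 -> x = 0.
Proof. by move=> -> . Qed.
Lemma eq0_by2 (x y : C) : 2 * x = y -> y = 0 -> x = 0.
Proof.
move=> <- /eqP; rewrite mulf_eq0 => /orP [|/eqP //].
by rewrite pnatr_eq0.
Qed.
Lemma sq0 (x : C) : x * x = 0 -> x = 0.
Proof. by move/eqP; rewrite mulf_eq0 orbb => /eqP. Qed.
Lemma idem01 (x : C) : x * x - x = 0 -> x = 0 \/ x = 1.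
Proof.
move=> h; have : x * (x - 1) = 0 by rewrite -h; ring.
move/eqP; rewrite mulf_eq0 => /orP [/eqP|]; first by left.
by rewrite subr_eq0 => /eqP; right.
Qed.
Lemma mul0_or (x y : C) : x * y = 0 -> x = 0 \/ y = 0.
Proof. by move/eqP; rewrite mulf_eq0 => /orP [/eqP|/eqP]; [left|right]. Qed.

Lemma sqrt_sub (c : C) : c != 0 -> exists s : C, s != 0 /\ c = (s ^+ 2)^-1.
Proof.
move=> hc; exists (sqrtC c^-1); rewrite sqrtCK invrK; split => //.
apply/eqP => h0; move: (sqrtCK c^-1); rewrite h0 expr0n /= => /esym/eqP.
by rewrite invr_eq0 (negbTE hc).
Qed.

Lemma tf_zero i j k : tf (Prm 0 0 0 0 0 0 0 0 0 0 0 0 0 0) i j k = 0.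
Proof. by move: i j k => [|[|[|i]]] [|[|[|j]]] [|[|[|k]]]. Qed.

Lemma triv_zero : ~ nontrivial (mkT (Prm 0 0 0 0 0 0 0 0 0 0 0 0 0 0)).
Proof.
move=> [x [y]]; rewrite /smul big1 ?eqxx // => i _; apply: big1 => j _.
have -> : mkT (Prm 0 0 0 0 0 0 0 0 0 0 0 0 0 0) i j = 0.
  by apply/rowP => k; rewrite !mxE tf_zero.
by rewrite scaler0.
Qed.



Lemma eq0_k (x y k : C) : x = k * y -> y = 0 -> x = 0.
Proof. by move=> -> ->; rewrite mulr0. Qed.
Lemma eq0_2k (x y k : C) : 2 * x = k * y -> y = 0 -> x = 0.
Proof. move=> h hy; apply: eq0_by2 h _; by rewrite hy mulr0. Qed.
Lemma sub0_eq (x y : C) : x - y = 0 -> x = y.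
Proof. by move/eqP; rewrite subr_eq0 => /eqP. Qed.
Lemma cube0 (x : C) : x * (x * x) = 0 -> x = 0.
Proof. by move/mul0_or => [//|/sq0]. Qed.




Lemma neq0_by (x y : C) : x = y -> y != 0 -> x != 0.
Proof. by move=> ->. Qed.

Ltac getE i j k m := let h := fresh "E" in
  have h := @RA_E _ ltac:(eassumption) i j k m erefl erefl erefl erefl;
  rewrite /Eq /asc /sum3 /= in h.
Ltac fsides := try (repeat (apply/andP; split)); try done.
Ltac leafeq0 := rewrite /prmR /gv /=; congr Prm; ring.
Ltac leafeq := rewrite /trp /prmR /gv /nc0 /nc1 /pr /dd /=; congr Prm; field; fsides.
Ltac byE h := first [apply: (@eq0_k _ _ 1 _ h); ring | apply: (@eq0_k _ _ (-1) _ h); ring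
  | apply: (@eq0_2k _ _ 1 _ h); ring | apply: (@eq0_2k _ _ (-1) _ h); ring].
Ltac treq := rewrite /trp /nc0 /nc1 /pr /dd /=; field; fsides.
Ltac idem x h := case: (idem01 h) => ?; subst x.
Ltac nz y := apply: (@neq0_by _ y); [ring|].
Ltac nzf y := apply: (@neq0_by _ y); [field; fsides|].

Lemma nf_nil A0 A1 B0 B1 C0 C1 :
  let p := Prm 0 1 0 0 0 0 0 0 A0 A1 B0 B1 C0 C1 in
  right_alternative (mkT p) -> nontrivial (mkT p) -> Goal p.
Proof.
move=> p hRA hN; subst p.
getE 1%N 1%N 2%N 2%N. getE 0%N 0%N 2%N 2%N. getE 2%N 0%N 0%N 2%N. getE 2%N 0%N 1%N 2%N.
getE 2%N 0%N 2%N 1%N.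
have hA1 : A1 = 0 by apply: sq0; apply: (@eq0_k _ _ (-1) _ E); ring.
subst A1.
have hA0 : A0 = 0 by apply: sq0; apply: (@eq0_k _ _ (-1) _ E0); ring.
subst A0.
have hB1 : B1 = B0 * B0 by apply: sub0_eq; apply: (@eq0_2k _ _ (-1) _ E1); ring.
subst B1.
have hB0 : B0 = 0 by apply: cube0; apply: (@eq0_2k _ _ 1 _ E2); ring.
subst B0.
have hC0 : C0 = 0 by apply: (@eq0_k _ _ 1 _ E3); ring.
subst C0.
case: (eqVneq C1 0) => hC1.
  subst C1; apply: (@leaf0 _ 37) => //; leafeq0.
have [s [hs ->]] := sqrt_sub hC1.
apply: (@leaf _ 38 1 0 0 1 s) => //.
  by rewrite mulr1 mulr0 subr0 oner_eq0.
leafeq.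
Qed.








Lemma one_neq0 : (1 : C) * 1 - 0 * 0 != 0.
Proof. by rewrite mulr1 mulr0 subr0 oner_eq0. Qed.
Lemma swap_neq0 : (0 : C) * 0 - 1 * 1 != 0.
Proof. by rewrite mulr0 mulr1 sub0r oppr_eq0 oner_eq0. Qed.

Lemma nf_zero (p : prm) : m000 p = 0 -> m001 p = 0 -> m010 p = 0 -> m011 p = 0 ->
  m100 p = 0 -> m101 p = 0 -> m110 p = 0 -> m111 p = 0 ->
  right_alternative (mkT p) -> nontrivial (mkT p) -> Goal p.
Proof.
case: p => e000 e001 e010 e011 e100 e101 e110 e111 A0 A1 B0 B1 C0 C1 /=.
move=> h1 h2 h3 h4 h5 h6 h7 h8 hRA hN; subst.
getE 0%N 0%N 2%N 2%N. getE 1%N 1%N 2%N 2%N. getE 2%N 0%N 0%N 2%N. getE 2%N 1%N 1%N 2%N.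
have hA0 : A0 = 0 by apply: sq0; apply: (@eq0_k _ _ (-1) _ E); ring.
have hA1 : A1 = 0 by apply: sq0; apply: (@eq0_k _ _ (-1) _ E0); ring.
have hB0 : B0 = 0 by apply: sq0; apply: (@eq0_2k _ _ 1 _ E1); ring.
have hB1 : B1 = 0 by apply: sq0; apply: (@eq0_2k _ _ 1 _ E2); ring.
subst.
case: (eqVneq C0 0) => hC0.
  subst C0; case: (eqVneq C1 0) => hC1.
    by subst C1; case: triv_zero.
  apply: (@leaf _ 39 0 C1 1 0 1) => //; rewrite ?oner_eq0 //.
    by nz (- C1); rewrite oppr_eq0.
  leafeq.
apply: (@leaf _ 39 C0 C1 0 1 1) => //; rewrite ?oner_eq0 //.
  by nz C0.
leafeq.
Qed.

Lemma nf_c0 (p : prm) : m000 p = 1 -> m001 p = 0 -> m010 p = 0 -> m011 p = 0 ->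
  m100 p = 0 -> m101 p = 0 -> m110 p = 0 -> m111 p = 0 ->
  right_alternative (mkT p) -> nontrivial (mkT p) -> Goal p.
Proof.
case: p => e000 e001 e010 e011 e100 e101 e110 e111 A0 A1 B0 B1 C0 C1 /=.
move=> h1 h2 h3 h4 h5 h6 h7 h8 hRA hN; subst.
getE 0%N 0%N 2%N 2%N. getE 1%N 1%N 2%N 2%N. getE 2%N 0%N 0%N 2%N. getE 2%N 1%N 1%N 2%N.
getE 2%N 0%N 2%N 0%N. getE 2%N 0%N 2%N 1%N.
have hA1 : A1 = 0 by apply: sq0; apply: (@eq0_k _ _ (-1) _ E0); ring.
have hB1 : B1 = 0 by apply: sq0; apply: (@eq0_2k _ _ 1 _ E2); ring.
subst.
have hA0 : A0 * A0 - A0 = 0 by apply: (@eq0_k _ _ (-1) _ E); ring.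
have hB0 : B0 * B0 - B0 = 0 by apply: (@eq0_2k _ _ 1 _ E1); ring.
have hc0 : C0 - A0 * C0 = 0 by apply: (@eq0_k _ _ 1 _ E3); ring.
have hc1 : A0 * C1 = 0 by apply: (@eq0_k _ _ (-1) _ E4); ring.
idem A0 hA0.
- have -> : C0 = 0 by rewrite -hc0; ring.
  idem B0 hB0.
  + case: (eqVneq C1 0) => hC1.
      by subst C1; apply: (@leaf0 _ 9) => //; leafeq0.
    apply: (@leaf _ 10 1 0 0 C1 1) => //; rewrite ?oner_eq0 //; first by nz C1.
    leafeq.
  + case: (eqVneq C1 0) => hC1.
      by subst C1; apply: (@leaf0 _ 11) => //; leafeq0.
    apply: (@leaf _ 12 1 0 0 C1 1) => //; rewrite ?oner_eq0 //; first by nz C1.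
    leafeq.
- have -> : C1 = 0 by rewrite -hc1; ring.
  idem B0 hB0.
  + case: (eqVneq C0 0) => hC0.
      by subst C0; apply: (@leaf0 _ 13) => //; leafeq0.
    have [s [hs ->]] := sqrt_sub hC0.
    apply: (@leaf _ 14 1 0 0 1 s) => //; rewrite ?oner_eq0 //; first exact: one_neq0.
    leafeq.
  + case: (eqVneq C0 0) => hC0.
      by subst C0; apply: (@leaf0 _ 15) => //; leafeq0.
    have [s [hs ->]] := sqrt_sub hC0.
    apply: (@leaf _ 16 1 0 0 1 s) => //; rewrite ?oner_eq0 //; first exact: one_neq0.
    leafeq.
Qed.



Lemma one_mul_neq (x : C) : x = 1 * 1 -> x = 0 -> False.
Proof. by move=> -> /eqP; rewrite mulr1 oner_eq0. Qed.

Lemma nf_cc_a (p : prm) : m000 p = 1 -> m001 p = 0 -> m010 p = 0 -> m011 p = 0 ->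
  m100 p = 0 -> m101 p = 0 -> m110 p = 0 -> m111 p = 1 -> a1 p = 0 ->
  right_alternative (mkT p) -> nontrivial (mkT p) -> Goal p.
Proof.
case: p => e000 e001 e010 e011 e100 e101 e110 e111 A0 A1 B0 B1 C0 C1 /=.
move=> h1 h2 h3 h4 h5 h6 h7 h8 h9 hRA hN; subst.
getE 0%N 0%N 2%N 2%N. getE 2%N 0%N 0%N 2%N. getE 2%N 1%N 1%N 2%N. getE 2%N 0%N 1%N 2%N.
getE 2%N 0%N 2%N 0%N. getE 2%N 1%N 2%N 1%N.
have hA0 : A0 * A0 - A0 = 0 by byE E.
have hB0 : B0 * B0 - B0 = 0 by byE E0.
have hB1 : B1 * B1 - B1 = 0 by byE E1.
have hB01 : B0 * B1 = 0 by byE E2.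
have hc0 : C0 - A0 * C0 = 0 by byE E3.
have hc1 : C1 = 0 by byE E4.
subst C1.
idem A0 hA0.
- have -> : C0 = 0 by rewrite -hc0; ring.
  idem B0 hB0; idem B1 hB1.
  + by apply: (@leaf0 _ 1) => //; leafeq0.
  + apply: (@leaf _ 4 0 1 1 0 1) => //; rewrite ?oner_eq0 //; first exact: swap_neq0.
    leafeq.
  + by apply: (@leaf0 _ 4) => //; leafeq0.
  + by case: (one_mul_neq erefl hB01).
- idem B0 hB0; idem B1 hB1.
  + case: (eqVneq C0 0) => hC0.
      by subst C0; apply: (@leaf0 _ 5) => //; leafeq0.
    have [s [hs ->]] := sqrt_sub hC0.
    apply: (@leaf _ 6 1 0 0 1 s) => //; rewrite ?oner_eq0 //; first exact: one_neq0.
    leafeq.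
  + case: (eqVneq C0 0) => hC0.
      subst C0; apply: (@leaf _ 7 0 1 1 0 1) => //; rewrite ?oner_eq0 //; first exact: swap_neq0.
      leafeq.
    have [s [hs ->]] := sqrt_sub hC0.
    apply: (@leaf _ 8 0 1 1 0 s) => //; rewrite ?oner_eq0 //; first exact: swap_neq0.
    leafeq.
  + case: (eqVneq C0 0) => hC0.
      by subst C0; apply: (@leaf0 _ 2) => //; leafeq0.
    have [s [hs ->]] := sqrt_sub hC0.
    apply: (@leaf _ 3 1 0 0 1 s) => //; rewrite ?oner_eq0 //; first exact: one_neq0.
    leafeq.
  + by case: (one_mul_neq erefl hB01).
Qed.

Lemma nf_cc (p : prm) : m000 p = 1 -> m001 p = 0 -> m010 p = 0 -> m011 p = 0 ->
  m100 p = 0 -> m101 p = 0 -> m110 p = 0 -> m111 p = 1 ->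
  right_alternative (mkT p) -> nontrivial (mkT p) -> Goal p.
Proof.
case: p => e000 e001 e010 e011 e100 e101 e110 e111 A0 A1 B0 B1 C0 C1 /=.
move=> h1 h2 h3 h4 h5 h6 h7 h8 hRA hN; subst.
getE 1%N 1%N 2%N 2%N. getE 0%N 1%N 2%N 2%N.
have hA1 : A1 * A1 - A1 = 0 by byE E.
have hA01 : A0 * A1 = 0 by byE E0.
idem A1 hA1.
  by apply: nf_cc_a.
have hA0 : A0 = 0 by rewrite -hA01; ring.
subst A0.
apply: (@step _ 0 1 1 0 1) => //; rewrite ?oner_eq0 //; first exact: swap_neq0.
move=> hRA' hN'; apply: nf_cc_a => //; treq.
Qed.

Lemma nf_nil' (p : prm) : m000 p = 0 -> m001 p = 1 -> m010 p = 0 -> m011 p = 0 ->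
  m100 p = 0 -> m101 p = 0 -> m110 p = 0 -> m111 p = 0 ->
  right_alternative (mkT p) -> nontrivial (mkT p) -> Goal p.
Proof.
case: p => e000 e001 e010 e011 e100 e101 e110 e111 A0 A1 B0 B1 C0 C1 /=.
move=> h1 h2 h3 h4 h5 h6 h7 h8 hRA hN; subst; exact: nf_nil.
Qed.

Lemma nf_dual (p : prm) : m000 p = 1 -> m001 p = 0 -> m010 p = 0 -> m011 p = 1 ->
  m100 p = 0 -> m101 p = 1 -> m110 p = 0 -> m111 p = 0 ->
  right_alternative (mkT p) -> nontrivial (mkT p) -> Goal p.
Proof.
case: p => e000 e001 e010 e011 e100 e101 e110 e111 A0 A1 B0 B1 C0 C1 /=.
move=> h1 h2 h3 h4 h5 h6 h7 h8 hRA hN; subst.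
getE 1%N 1%N 2%N 2%N. getE 0%N 0%N 2%N 2%N. getE 2%N 1%N 1%N 2%N. getE 2%N 0%N 0%N 2%N.
getE 2%N 1%N 2%N 1%N. getE 2%N 0%N 2%N 1%N.
have hA1 : A1 = 0 by apply: sq0; byE E.
have hB1 : B1 = 0 by apply: sq0; byE E1.
subst.
have hA0 : A0 * A0 - A0 = 0 by byE E0.
have hB0 : B0 * B0 - B0 = 0 by byE E2.
have hC0 : C0 = 0 by byE E3.
have hc1 : C1 - A0 * C1 = 0 by byE E4.
subst C0.
idem A0 hA0.
- have -> : C1 = 0 by rewrite -hc1; ring.
  idem B0 hB0.
  + by apply: (@leaf0 _ 17) => //; leafeq0.
  + by apply: (@leaf0 _ 20) => //; leafeq0.
- idem B0 hB0.
  + case: (eqVneq C1 0) => hC1.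
      by subst C1; apply: (@leaf0 _ 18) => //; leafeq0.
    have [s [hs ->]] := sqrt_sub hC1.
    apply: (@leaf _ 19 1 0 0 1 s) => //; rewrite ?oner_eq0 //; first exact: one_neq0.
    leafeq.
  + case: (eqVneq C1 0) => hC1.
      by subst C1; apply: (@leaf0 _ 21) => //; leafeq0.
    have [s [hs ->]] := sqrt_sub hC1.
    apply: (@leaf _ 22 1 0 0 1 s) => //; rewrite ?oner_eq0 //; first exact: one_neq0.
    leafeq.
Qed.

Lemma nf_left (p : prm) : m000 p = 1 -> m001 p = 0 -> m010 p = 0 -> m011 p = 1 ->
  m100 p = 0 -> m101 p = 0 -> m110 p = 0 -> m111 p = 0 ->
  right_alternative (mkT p) -> nontrivial (mkT p) -> Goal p.
Proof.
case: p => e000 e001 e010 e011 e100 e101 e110 e111 A0 A1 B0 B1 C0 C1 /=.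
move=> h1 h2 h3 h4 h5 h6 h7 h8 hRA hN; subst.
getE 1%N 1%N 2%N 2%N. getE 0%N 0%N 2%N 2%N. getE 2%N 1%N 1%N 2%N. getE 2%N 0%N 0%N 2%N.
getE 2%N 1%N 2%N 1%N. getE 2%N 0%N 2%N 1%N.
have hA1 : A1 = 0 by apply: sq0; byE E.
have hB1 : B1 = 0 by apply: sq0; byE E1.
subst.
have hA0 : A0 * A0 - A0 = 0 by byE E0.
have hB0 : B0 * B0 - B0 = 0 by byE E2.
have hC0 : C0 = 0 by byE E3.
have hc1 : A0 * C1 = 0 by byE E4.
subst C0.
idem A0 hA0.
- idem B0 hB0.
  + case: (eqVneq C1 0) => hC1.
      by subst C1; apply: (@leaf0 _ 23) => //; leafeq0.
    have [s [hs ->]] := sqrt_sub hC1.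
    apply: (@leaf _ 24 1 0 0 1 s) => //; rewrite ?oner_eq0 //; first exact: one_neq0.
    leafeq.
  + case: (eqVneq C1 0) => hC1.
      by subst C1; apply: (@leaf0 _ 29) => //; leafeq0.
    have [s [hs ->]] := sqrt_sub hC1.
    apply: (@leaf _ 30 1 0 0 1 s) => //; rewrite ?oner_eq0 //; first exact: one_neq0.
    leafeq.
- have -> : C1 = 0 by rewrite -hc1; ring.
  idem B0 hB0.
  + by apply: (@leaf0 _ 32) => //; leafeq0.
  + by apply: (@leaf0 _ 36) => //; leafeq0.
Qed.

Lemma nf_right (p : prm) : m000 p = 1 -> m001 p = 0 -> m010 p = 0 -> m011 p = 0 ->
  m100 p = 0 -> m101 p = 1 -> m110 p = 0 -> m111 p = 0 ->
  right_alternative (mkT p) -> nontrivial (mkT p) -> Goal p.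
Proof.
case: p => e000 e001 e010 e011 e100 e101 e110 e111 A0 A1 B0 B1 C0 C1 /=.
move=> h1 h2 h3 h4 h5 h6 h7 h8 hRA hN; subst.
getE 1%N 1%N 2%N 2%N. getE 0%N 0%N 2%N 2%N. getE 2%N 1%N 1%N 2%N. getE 2%N 0%N 0%N 2%N.
getE 2%N 0%N 2%N 0%N. getE 2%N 0%N 2%N 1%N.
have hA1 : A1 = 0 by apply: sq0; byE E.
have hB1 : B1 = 0 by apply: sq0; byE E1.
subst.
have hA0 : A0 * A0 - A0 = 0 by byE E0.
have hB0 : B0 * B0 - B0 = 0 by byE E2.
have hc0 : C0 - A0 * C0 = 0 by byE E3.
have hc1 : C1 - A0 * C1 = 0 by byE E4.
idem A0 hA0.
- have -> : C0 = 0 by rewrite -hc0; ring.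
  have -> : C1 = 0 by rewrite -hc1; ring.
  idem B0 hB0.
  + by apply: (@leaf0 _ 25) => //; leafeq0.
  + by apply: (@leaf0 _ 31) => //; leafeq0.
- case: (eqVneq C0 0) => hC0.
  + subst C0; case: (eqVneq C1 0) => hC1.
      subst C1; idem B0 hB0.
      * by apply: (@leaf0 _ 26) => //; leafeq0.
      * by apply: (@leaf0 _ 33) => //; leafeq0.
    have [s [hs ->]] := sqrt_sub hC1.
    idem B0 hB0.
    * apply: (@leaf _ 28 1 0 0 1 s) => //; rewrite ?oner_eq0 //; first exact: one_neq0.
      leafeq.
    * apply: (@leaf _ 35 1 0 0 1 s) => //; rewrite ?oner_eq0 //; first exact: one_neq0.
      leafeq.
  + have [s [hs ->]] := sqrt_sub hC0.
    have hd : (1 : C) * 1 - C1 * s ^+ 2 * 0 != 0 by nz (1 : C); rewrite oner_eq0.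
    idem B0 hB0.
    * apply: (@leaf _ 27 1 (C1 * s ^+ 2) 0 1 s) => //; rewrite ?oner_eq0 //.
      leafeq.
    * apply: (@leaf _ 34 1 (C1 * s ^+ 2) 0 1 s) => //; rewrite ?oner_eq0 //.
      leafeq.
Qed.









Lemma quad_root (a b : C) : exists r : C, r ^+ 2 = b * r + a.
Proof.
pose w := sqrtC (b ^+ 2 + 4%:R * a).
have hw : w ^+ 2 = b ^+ 2 + 4%:R * a by rewrite sqrtCK.
exists ((b + w) / 2%:R).
have h2 : (2%:R : C) != 0 by rewrite pnatr_eq0.
apply: sub0_eq.
have -> : ((b + w) / 2%:R) ^+ 2 - (b * ((b + w) / 2%:R) + a) =
   (w ^+ 2 - (b ^+ 2 + 4%:R * a)) / 4%:R.
  by field.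
by rewrite hw subrr mul0r.
Qed.

Lemma caseIIa (p : prm) : m000 p = 0 -> m001 p = 1 ->
  right_alternative (mkT p) -> nontrivial (mkT p) -> Goal p.
Proof.
case: p => e000 e001 e010 e011 e100 e101 e110 e111 A0 A1 B0 B1 C0 C1 /=.
move=> h1 h2 hRA hN; subst.
getE 0%N 0%N 0%N 0%N. getE 0%N 0%N 0%N 1%N.
have h3 : e100 = e010 by apply: sub0_eq; byE E.
have h4 : e101 = e011 by apply: sub0_eq; byE E0.
subst.
getE 1%N 0%N 0%N 0%N. getE 1%N 0%N 0%N 1%N.
have h5 : e110 = e010 * e011 by apply: sub0_eq; byE E1.
have h6 : e111 = e010 + e011 * e011 by apply: sub0_eq; byE E2.
subst.
case: (eqVneq e010 0) => ha.
  subst e010.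
  case: (eqVneq e011 0) => hb.
    subst e011; apply: nf_nil' => //=; ring.
  apply: (@step _ 0 (e011 ^-2) (- e011) 1 1) => //; rewrite ?oner_eq0 //.
    nzf (e011 ^-1); by rewrite invr_eq0.
  move=> hRA' hN'; apply: nf_c0 => //; treq.
have [r hr] := quad_root e010 e011.
have [r2 hr2] : exists r2, e011 = r + r2 by exists (e011 - r); ring.
subst e011.
have he : e010 = r ^+ 2 - (r + r2) * r by rewrite hr; ring.
subst e010.
have e : r ^+ 2 - (r + r2) * r = - (r * r2) by ring.
rewrite e oppr_eq0 mulf_eq0 negb_or in ha; case/andP: ha => hr0 hr20.
case: (eqVneq r r2) => hrr.
  subst r2.
  apply: (@step _ (2%:R / r) (- (r * r)^-1) (-1) (r^-1) 1) => //; rewrite ?oner_eq0 //.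
    nzf ((r * r)^-1); by rewrite invr_eq0 mulf_neq0.
  move=> hRA' hN'; apply: nf_dual => //; treq.
have hrr' : r - r2 != 0 by rewrite subr_eq0.
have hrr'' : r2 - r != 0 by rewrite subr_eq0 eq_sym.
apply: (@step _ (- r2 / (r * (r - r2))) ((r * (r - r2))^-1)
   (- r / (r2 * (r2 - r))) ((r2 * (r2 - r))^-1) 1) => //; rewrite ?oner_eq0 //.
  nzf (- (r * r2 * (r - r2))^-1); by rewrite oppr_eq0 invr_eq0 !mulf_neq0.
move=> hRA' hN'; apply: nf_cc => //; treq.
Qed.









Definition Dp (p : prm) (y0 y1 : C) := y0 * pr p y0 y1 y0 y1 1 - y1 * pr p y0 y1 y0 y1 0.

Lemma eq0_sum2 (x y z : C) : 2 * x = y + z -> y = 0 -> z = 0 -> x = 0.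
Proof. move=> h hy hz; apply: (@eq0_2k _ (y + z) 1); [by rewrite mul1r | by rewrite hy hz addr0]. Qed.
Lemma eq0_sub2 (x y z : C) : 2 * x = y - z -> y = 0 -> z = 0 -> x = 0.
Proof. move=> h hy hz; apply: (@eq0_2k _ (y - z) 1); [by rewrite mul1r | by rewrite hy hz subr0]. Qed.

Lemma caseIIb (p : prm) : m000 p = 1 -> m001 p = 0 -> (forall y0 y1, Dp p y0 y1 = 0) ->
  right_alternative (mkT p) -> nontrivial (mkT p) -> Goal p.
Proof.
case: p => e000 e001 P Q R S M N A0 A1 B0 B1 C0 C1 /=.
move=> h1 h2 hD hRA hN; subst.
have D01 := hD 0 1; have D11 := hD 1 1; have D1m := hD 1 (-1).
rewrite /Dp /pr /= in D01 D11 D1m.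
have hM : M = 0 by byE D01.
subst M.
have hQ : Q + S - 1 = 0 by apply: (eq0_sub2 _ D11 D1m); ring.
have hNN : N - P - R = 0 by apply: (eq0_sum2 _ D11 D1m); ring.
have eQ : Q = 1 - S by rewrite -[Q]subr0 -hQ; ring.
have eN : N = P + R by rewrite -[N]subr0 -hNN; ring.
subst Q N.
getE 1%N 0%N 0%N 0%N. getE 1%N 0%N 0%N 1%N. getE 0%N 1%N 1%N 1%N.
have hSR : S * R = 0 by byE E.
have hS : S * S - S = 0 by byE E0.
have hPQ : P * (1 - S) = 0 by byE E1.
idem S hS.
- have eP : P = 0 by rewrite -hPQ; ring.
  subst P.
  apply: (@step _ 1 0 (- R) 1 1) => //; rewrite ?oner_eq0 //.
    by nz (1 : C); rewrite oner_eq0.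
  move=> hRA' hN'; apply: nf_left => //; treq.
- have eR : R = 0 by rewrite -hSR; ring.
  subst R.
  apply: (@step _ 1 0 (- P) 1 1) => //; rewrite ?oner_eq0 //.
    by nz (1 : C); rewrite oner_eq0.
  move=> hRA' hN'; apply: nf_right => //; treq.
Qed.

Lemma D_trp (p : prm) (u0 u1 v0 v1 s y0 y1 : C) : u0 * v1 - u1 * v0 != 0 ->
  Dp (trp p u0 u1 v0 v1 s) y0 y1 =
  Dp p (y0 * u0 + y1 * v0) (y0 * u1 + y1 * v1) / (u0 * v1 - u1 * v0).
Proof. move=> hd; rewrite /Dp /trp /nc0 /nc1 /pr /dd /=; field; fsides. Qed.

Lemma idem_step (p : prm) (u0 u1 : C) : pr p u0 u1 u0 u1 0 = u0 ->
  pr p u0 u1 u0 u1 1 = u1 -> (u0 != 0) || (u1 != 0) ->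
  (forall y0 y1, Dp p y0 y1 = 0) ->
  right_alternative (mkT p) -> nontrivial (mkT p) -> Goal p.
Proof.
move=> hu0 hu1 hu hD hRA hN.
have gen : forall v0 v1, u0 * v1 - u1 * v0 != 0 -> Goal p.
  move=> v0 v1 hd.
  apply: (@step _ u0 u1 v0 v1 1) => //; rewrite ?oner_eq0 //.
  move=> hRA' hN'; apply: caseIIb => //.
  - by rewrite /trp /= hu0 hu1 /nc0 /dd; field.
  - by rewrite /trp /= hu0 hu1 /nc1 /dd; field.
  - by move=> y0 y1; rewrite D_trp // hD mul0r.
case: (eqVneq u0 0) => h0.
  have h1 : u1 != 0 by move: hu; rewrite h0 eqxx.
  apply: (gen 1 0); by nz (- u1); rewrite oppr_eq0.
apply: (gen 0 1); by nz u0.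
Qed.

Lemma caseI (p : prm) : (forall x0 x1, pr p x0 x1 x0 x1 0 = 0 /\ pr p x0 x1 x0 x1 1 = 0) ->
  right_alternative (mkT p) -> nontrivial (mkT p) -> Goal p.
Proof.
case: p => e000 e001 e010 e011 e100 e101 e110 e111 A0 A1 B0 B1 C0 C1 h hRA hN.
have [h10a h10b] := h 1 0; have [h01a h01b] := h 0 1; have [h11a h11b] := h 1 1.
rewrite /pr /= in h10a h10b h01a h01b h11a h11b.
have h1 : e000 = 0 by byE h10a.
have h2 : e001 = 0 by byE h10b.
have h3 : e110 = 0 by byE h01a.
have h4 : e111 = 0 by byE h01b.
subst.
have h5 : e100 = - e010 by apply: sub0_eq; byE h11a.
have h6 : e101 = - e011 by apply: sub0_eq; byE h11b.
subst.
getE 0%N 1%N 1%N 0%N. getE 1%N 0%N 0%N 1%N.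
have h7 : e010 = 0 by apply: sq0; byE E.
have h8 : e011 = 0 by apply: sq0; byE E0.
subst.
apply: nf_zero => //=; ring.
Qed.

Lemma mk_idem (p : prm) (x0 x1 l : C) k : l != 0 ->
  pr p x0 x1 x0 x1 0 = l * x0 -> pr p x0 x1 x0 x1 1 = l * x1 ->
  pr p (x0 / l) (x1 / l) (x0 / l) (x1 / l) k = pr p x0 x1 x0 x1 k / (l * l).
Proof. move=> hl _ _; rewrite /pr; field; fsides. Qed.


Lemma main (p : prm) : right_alternative (mkT p) -> nontrivial (mkT p) -> Goal p.
Proof.
move=> hRA hN.
case: (classic (forall x0 x1, pr p x0 x1 x0 x1 0 = 0 /\ pr p x0 x1 x0 x1 1 = 0)) => hI.
  exact: caseI.
have [x0 hx0] := not_all_ex_not _ _ hI.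
have [x1 hx] := not_all_ex_not _ _ hx0.
case: (classic (exists y0 y1, Dp p y0 y1 != 0)) => hII.
  have [y0 [y1 hy]] := hII.
  move: hy; rewrite /Dp => hy.
  apply: (@step _ y0 y1 (pr p y0 y1 y0 y1 0) (pr p y0 y1 y0 y1 1) 1) => //; rewrite ?oner_eq0 //.
  move=> hRA' hN'; apply: caseIIa => //.
  - by rewrite /trp /= /nc0 /dd; field.
  - by rewrite /trp /= /nc1 /dd; field.
have hD : forall y0 y1, Dp p y0 y1 = 0.
  move=> y0 y1; case: (eqVneq (Dp p y0 y1) 0) => // h; case: hII; by exists y0, y1.
have [q0 eq0] : exists q0, pr p x0 x1 x0 x1 0 = q0 by eexists.
have [q1 eq1] : exists q1, pr p x0 x1 x0 x1 1 = q1 by eexists.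
have hDx := hD x0 x1; rewrite /Dp eq0 eq1 in hDx.
rewrite eq0 eq1 in hx.
have hq : (q0 != 0) || (q1 != 0).
  case: (eqVneq q0 0) => [e0|] //; case: (eqVneq q1 0) => [e1|] //; by case: hx.
have key : forall l, l != 0 -> q0 = l * x0 -> q1 = l * x1 -> Goal p.
  move=> l hl e0 e1.
  apply: (@idem_step _ (x0 / l) (x1 / l)) => //.
  - rewrite (mk_idem _ hl) ?eq0 ?eq1 ?e0 ?e1 //; field; fsides.
  - rewrite (mk_idem _ hl) ?eq0 ?eq1 ?e0 ?e1 //; field; fsides.
  - case: (eqVneq x0 0) => h0; last by rewrite mulf_neq0 ?invr_eq0.
    case: (eqVneq x1 0) => h1; last by rewrite orbC mulf_neq0 ?invr_eq0.
    move: hq; by rewrite e0 e1 h0 h1 !mulr0 eqxx.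
case: (eqVneq x0 0) => hx0'.
  subst x0.
  have hx1 : x1 != 0.
    apply/eqP => h1; subst x1; move: hq; rewrite -eq0 -eq1 /pr.
    by rewrite !mul0r !addr0 eqxx.
  have e0 : q0 = 0.
    have : x1 * q0 = 0 by rewrite -[RHS]oppr0 -hDx; ring.
    by move/mul0_or => [h|//]; move: hx1; rewrite h eqxx.
  have hq1 : q1 != 0 by move: hq; rewrite e0 eqxx.
  apply: (key (q1 / x1)).
  - by rewrite mulf_neq0 ?invr_eq0.
  - by rewrite e0 mulr0.
  - by field.
have hq0 : q0 != 0.
  apply/eqP => e0; rewrite e0 in hDx.
  have : x0 * q1 = 0 by rewrite -hDx; ring.
  move/mul0_or => [h|h]; first by move: hx0'; rewrite h eqxx.
  by move: hq; rewrite h e0 eqxx.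
apply: (key (q0 / x0)).
- by rewrite mulf_neq0 ?invr_eq0.
- by field.
- have e : x0 * q1 = x1 * q0 by apply: sub0_eq.
  apply: (mulfI hx0'); rewrite e; field; fsides.
Qed.

Definition o0 : 'I_3 := @Ordinal 3 0 erefl.
Definition o1 : 'I_3 := @Ordinal 3 1 erefl.
Definition o2 : 'I_3 := @Ordinal 3 2 erefl.

Lemma ord3_cases (i : 'I_3) : i = o0 \/ i = o1 \/ i = o2.
Proof.
case: i => [[|[|[|m]]] H] //; [left|right;left|right;right]; exact: val_inj.
Qed.

Definition prmT (T : structc) : prm :=
  Prm (T o0 o0 0 o0) (T o0 o0 0 o1) (T o0 o1 0 o0) (T o0 o1 0 o1)
      (T o1 o0 0 o0) (T o1 o0 0 o1) (T o1 o1 0 o0) (T o1 o1 0 o1)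
      (T o0 o2 0 o2) (T o1 o2 0 o2) (T o2 o0 0 o2) (T o2 o1 0 o2)
      (T o2 o2 0 o0) (T o2 o2 0 o1).

Lemma graded_mkT (T : structc) : graded T -> T = mkT (prmT T).
Proof.
move=> hg; apply: functional_extensionality => i; apply: functional_extensionality => j.
apply/rowP => k; rewrite mxE.
case: (ord3_cases i) => [->|[->|->]]; case: (ord3_cases j) => [->|[->|->]];
  case: (ord3_cases k) => [->|[->|->]] //=; by rewrite hg.
Qed.

Theorem theoremA2 (T : structc) :
  graded T -> right_alternative T -> nontrivial T ->
  exists2 n : nat, (1 <= n <= 39)%N & super_iso T (Rmodel n).
Proof.
move=> hg hRA hN.
have eT := graded_mkT hg.
rewrite eT in hRA hN *.
exact: main.
Qed.
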